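(* Let $\mathscr{G}_n$ be a simple, verbose $\upsilon$-reduction grammar. Then for each production $G_n \to \chi[\sigma_1]\cdots[\sigma_w]$ of $\mathscr{G}_n$ whose right-hand side has closure width $w$, every ground term $\delta \in L(\chi[\sigma_1]\cdots[\sigma_w])$ has closure width $w$.
   Context: $\lambda\upsilon$-terms: $t ::= \underline{n} \mid \lambda t \mid t\,t \mid t[s]$; substitutions $s ::= t/ \mid \Uparrow(s) \mid\ \uparrow$; indices $\underline{n} ::= \underline{0} \mid \mathtt{S}\,\underline{n}$. The $\upsilon$-rules: $(a b)[s] \to a[s](b[s])$; $(\lambda a)[s] \to \lambda(a[\Uparrow(s)])$; $\underline{0}[a/] \to a$; $(\mathtt{S}\,\underline{n})[a/] \to \underline{n}$; $\underline{0}[\Uparrow(s)] \to \underline{0}$; $(\mathtt{S}\,\underline{n})[\Uparrow(s)] \to \underline{n}[s][\uparrow]$; $\underline{n}[\uparrow] \to \mathtt{S}\,\underline{n}$. A term normalises in $k$ steps if leftmost-outermost $\upsilon$-reduction reaches a $\upsilon$-normal form in exactly $k$ steps. $\mathscr{F}$ is the ranked alphabet of $\lambda\upsilon$ symbols (application, closure $\cdot[\cdot]$ binary; $\lambda$, $\cdot/$, $\Uparrow$, $\mathtt{S}$ unary; $\uparrow,\underline{0}$ constants); $\mathscr{T}_{\mathscr{F}}(X)$ is the set of terms over $\mathscr{F}$ with variables from $X$. In a regular tree grammar with productions $X\to\alpha$, $L(\alpha)$ is the set of ground terms derivable from $\alpha$; a non-terminal is unambiguous if each ground term has at most one derivation from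 it; a production $X\to\alpha$ is self-referencing if $X$ occurs in $\alpha$, regular otherwise. $\Lambda$ has productions $T \to N \mid \lambda T \mid T T \mid T[S]$, $S \to T/ \mid \Uparrow(S) \mid \uparrow$, $N \to \underline{0} \mid \mathtt{S} N$. A $\upsilon$-reduction grammar $\mathscr{G}_n$ has axiom $G_n$, non-terminals $\{T,S,N,G_0,\dots,G_n\}$, contains all productions of $\Lambda$, and each $G_k$ ($0\le k\le n$) is unambiguous with $L(G_k)$ the set of terms normalising in exactly $k$ steps. It is simple if its self-referencing productions are productions of $\Lambda$ or of the form $G_k \to \lambda G_k \mid G_0 G_k \mid G_k G_0$, and each regular production $G_k\to\alpha$ has $\alpha \in \mathscr{T}_{\mathscr{F}}(\{T,S,N,G_0,\dots,G_{k-1}\})$. It is verbose if none of its productions has the form $X \to G_k[\sigma_1]\cdots[\sigma_w]$ for some $k$ and $w\ge 0$. A term $\alpha$ has closure width $w$ if $w$ is the largest non-negative integer such that $\alpha = \chi[\sigma_1]\cdots[\sigma_w]$ for some term $\chi$ (the head) and terms $\sigma_1,\dots,\sigma_w$. *)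

(* Defs.v *)
From Stdlib Require Import List Arith.
Import ListNotations.

Inductive tm : Type :=
| App   : tm -> tm -> tm
| Clo   : tm -> tm -> tm      (* a[s] *)
| Lam   : tm -> tm
| Slash : tm -> tm            (* a/ *)
| Lift  : tm -> tm            (* Uparrow(s) *)
| Succ  : tm -> tm
| Shift : tm                  (* uparrow *)
| Zero  : tm.

(** Sorts of Lambda: lambda-upsilon terms (T), substitutions (S), indices (N). *)
Fixpoint is_index (t : tm) : Prop :=
  match t with
  | Zero => True
  | Succ n => is_index n
  | _ => False
  end.

Fixpoint is_term (t : tm) : Prop :=
  match t with
  | Zero => True
  | Succ n => is_index n
  | Lam a => is_term a
  | App a b => is_term a /\ is_term b
  | Clo a s => is_term a /\ is_subst s
  | _ => False
  end
with is_subst (s : tm) : Prop :=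
  match s with
  | Slash a => is_term a
  | Lift s' => is_subst s'
  | Shift => True
  | _ => False
  end.

Inductive rootstep : tm -> tm -> Prop :=
| r_app   : forall a b s, rootstep (Clo (App a b) s) (App (Clo a s) (Clo b s))
| r_lam   : forall a s, rootstep (Clo (Lam a) s) (Lam (Clo a (Lift s)))
| r_zslash: forall a, rootstep (Clo Zero (Slash a)) a
| r_sslash: forall n a, rootstep (Clo (Succ n) (Slash a)) n
| r_zlift : forall s, rootstep (Clo Zero (Lift s)) Zero
| r_slift : forall n s, rootstep (Clo (Succ n) (Lift s)) (Clo (Clo n s) Shift)
| r_shift : forall n, is_index n -> rootstep (Clo n Shift) (Succ n).

Definition is_redex (t : tm) : Prop := exists t', rootstep t t'.

Inductive ustep : tm -> tm -> Prop :=
| u_root : forall t t', rootstep t t' -> ustep t t'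
| u_appl : forall a a' b, ustep a a' -> ustep (App a b) (App a' b)
| u_appr : forall a b b', ustep b b' -> ustep (App a b) (App a b')
| u_clol : forall a a' s, ustep a a' -> ustep (Clo a s) (Clo a' s)
| u_clor : forall a s s', ustep s s' -> ustep (Clo a s) (Clo a s')
| u_lam  : forall a a', ustep a a' -> ustep (Lam a) (Lam a')
| u_slash: forall a a', ustep a a' -> ustep (Slash a) (Slash a')
| u_lift : forall a a', ustep a a' -> ustep (Lift a) (Lift a')
| u_succ : forall a a', ustep a a' -> ustep (Succ a) (Succ a').

Definition unf (t : tm) : Prop := ~ exists t', ustep t t'.

Inductive lostep : tm -> tm -> Prop :=
| lo_root : forall t t', rootstep t t' -> lostep t t'
| lo_appl : forall a a' b, lostep a a' -> lostep (App a b) (App a' b)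
| lo_appr : forall a b b', unf a -> lostep b b' -> lostep (App a b) (App a b')
| lo_clol : forall a a' s, ~ is_redex (Clo a s) -> lostep a a' ->
            lostep (Clo a s) (Clo a' s)
| lo_clor : forall a s s', ~ is_redex (Clo a s) -> unf a -> lostep s s' ->
            lostep (Clo a s) (Clo a s')
| lo_lam  : forall a a', lostep a a' -> lostep (Lam a) (Lam a')
| lo_slash: forall a a', lostep a a' -> lostep (Slash a) (Slash a')
| lo_lift : forall a a', lostep a a' -> lostep (Lift a) (Lift a')
| lo_succ : forall a a', lostep a a' -> lostep (Succ a) (Succ a').

Inductive lo_steps : nat -> tm -> tm -> Prop :=
| lo0 : forall t, lo_steps 0 t t
| loS : forall k t u v, lostep t u -> lo_steps k u v -> lo_steps (S k) t v.

Definition normalises_in (k : nat) (t : tm) : Prop :=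
  exists u, lo_steps k t u /\ unf u.

Inductive nt : Type := NT | NS | NN | NG (k : nat).

Inductive pat : Type :=
| PVar   : nt -> pat
| PApp   : pat -> pat -> pat
| PClo   : pat -> pat -> pat
| PLam   : pat -> pat
| PSlash : pat -> pat
| PLift  : pat -> pat
| PSucc  : pat -> pat
| PShift : pat
| PZero  : pat.

Definition production := (nt * pat)%type.
Definition grammar := list production.

(** Derivation trees: a node records the production used and the derivations
    of the non-terminal occurrences of its right-hand side, left to right. *)
Inductive dtree : Type := DNode : production -> list dtree -> dtree.

Inductive valid (g : grammar) : nt -> tm -> dtree -> Prop :=
| v_node : forall X a t ds, In (X, a) g -> pvalid g a t ds ->
           valid g X t (DNode (X, a) ds)
with pvalid (g : grammar) : pat -> tm -> list dtree -> Prop :=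
| pv_var : forall X t d, valid g X t d -> pvalid g (PVar X) t [d]
| pv_app : forall a b ta tb d1 d2, pvalid g a ta d1 -> pvalid g b tb d2 ->
           pvalid g (PApp a b) (App ta tb) (d1 ++ d2)
| pv_clo : forall a b ta tb d1 d2, pvalid g a ta d1 -> pvalid g b tb d2 ->
           pvalid g (PClo a b) (Clo ta tb) (d1 ++ d2)
| pv_lam : forall a t d, pvalid g a t d -> pvalid g (PLam a) (Lam t) d
| pv_slash : forall a t d, pvalid g a t d -> pvalid g (PSlash a) (Slash t) d
| pv_lift : forall a t d, pvalid g a t d -> pvalid g (PLift a) (Lift t) d
| pv_succ : forall a t d, pvalid g a t d -> pvalid g (PSucc a) (Succ t) d
| pv_shift : pvalid g PShift Shift []
| pv_zero : pvalid g PZero Zero [].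

Definition langN (g : grammar) (X : nt) (t : tm) : Prop := exists d, valid g X t d.
Definition langP (g : grammar) (a : pat) (t : tm) : Prop := exists ds, pvalid g a t ds.

Definition unambiguous (g : grammar) (X : nt) : Prop :=
  forall t d1 d2, valid g X t d1 -> valid g X t d2 -> d1 = d2.

Fixpoint vars_in (P : nt -> Prop) (a : pat) : Prop :=
  match a with
  | PVar X => P X
  | PApp a b | PClo a b => vars_in P a /\ vars_in P b
  | PLam a | PSlash a | PLift a | PSucc a => vars_in P a
  | PShift | PZero => True
  end.

Fixpoint occurs (X : nt) (a : pat) : Prop :=
  match a with
  | PVar Y => X = Y
  | PApp a b | PClo a b => occurs X a \/ occurs X b
  | PLam a | PSlash a | PLift a | PSucc a => occurs X a
  | PShift | PZero => False
  end.

Definition nt_upto (k : nat) (X : nt) : Prop :=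
  match X with NG j => j <= k | _ => True end.
Definition nt_below (k : nat) (X : nt) : Prop :=
  match X with NG j => j < k | _ => True end.

Definition Lambda : grammar :=
  [ (NT, PVar NN); (NT, PLam (PVar NT)); (NT, PApp (PVar NT) (PVar NT));
    (NT, PClo (PVar NT) (PVar NS));
    (NS, PSlash (PVar NT)); (NS, PLift (PVar NS)); (NS, PShift);
    (NN, PZero); (NN, PSucc (PVar NN)) ].

Definition reduction_grammar (n : nat) (g : grammar) : Prop :=
  (forall X a, In (X, a) g -> nt_upto n X /\ vars_in (nt_upto n) a) /\
  (forall p, In p Lambda -> In p g) /\
  (forall k, k <= n ->
     unambiguous g (NG k) /\
     (forall t, langN g (NG k) t <-> is_term t /\ normalises_in k t)).

Definition simple (n : nat) (g : grammar) : Prop :=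
  (forall X a, In (X, a) g -> occurs X a ->
     In (X, a) Lambda \/
     exists k, (X, a) = (NG k, PLam (PVar (NG k))) \/
               (X, a) = (NG k, PApp (PVar (NG 0)) (PVar (NG k))) \/
               (X, a) = (NG k, PApp (PVar (NG k)) (PVar (NG 0)))) /\
  (forall k a, In (NG k, a) g -> ~ occurs (NG k) a -> vars_in (nt_below k) a).

Fixpoint phead (a : pat) : pat :=
  match a with PClo b _ => phead b | _ => a end.

Definition verbose (g : grammar) : Prop :=
  forall X a k, In (X, a) g -> phead a <> PVar (NG k).

Fixpoint pwidth (a : pat) : nat :=
  match a with PClo b _ => S (pwidth b) | _ => 0 end.
Fixpoint width (t : tm) : nat :=
  match t with Clo b _ => S (width b) | _ => 0 end.

(* Main.v *)
Require Import Defs.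
From Stdlib Require Import List Arith Lia.
Import ListNotations.

Fixpoint closesR (t : tm) (L : list tm) : tm :=
  match L with [] => t | x :: L' => Clo (closesR t L') x end.

Lemma width_closesR t L : width (closesR t L) = length L + width t.
Proof. induction L; simpl; auto. Qed.

Lemma is_term_closesR t L : is_term (closesR t L) -> is_term t.
Proof. induction L; simpl; tauto. Qed.

Lemma decomp g a : forall delta ds, pvalid g a delta ds ->
  exists tc L dc, delta = closesR tc L /\ length L = pwidth a /\
    pvalid g (phead a) tc dc /\
    forall t' d', pvalid g (phead a) t' d' -> exists ds', pvalid g a (closesR t' L) ds'.
Proof.
  induction a; intros delta ds H;
    try (exists delta, [], ds; simpl; split; [reflexivity|split;[reflexivity|split;[exact H| intros t' d' H'; exists d'; exact H']]]).
  inversion H; subst.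
  match goal with Hx : pvalid g a1 _ _ |- _ => rename Hx into Ha1 end.
  destruct (IHa1 _ _ Ha1) as [tc [L [dc [E [Hl [Hp Hf]]]]]].
  exists tc, (tb :: L), dc. simpl. split; [subst; reflexivity|].
  split; [lia|]. split; [exact Hp|].
  intros t' d' H'. destruct (Hf t' d' H') as [ds' Hds'].
  exists (ds' ++ d2). constructor; auto.
Qed.

Lemma rootstep_det t u1 u2 : rootstep t u1 -> rootstep t u2 -> u1 = u2.
Proof. intros H1 H2; inversion H1; subst; inversion H2; subst; auto; simpl in *; tauto. Qed.

Lemma lostep_ustep t u : lostep t u -> ustep t u.
Proof. induction 1; try (constructor; auto; fail). Qed.

Lemma unf_nolo t u : unf t -> lostep t u -> False.
Proof. intros H Hl. apply H. exists u. apply lostep_ustep; auto. Qed.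

Lemma lostep_det t u1 : lostep t u1 -> forall u2, lostep t u2 -> u1 = u2.
Proof.
  induction 1; intros u2 H2; inversion H2; subst;
    try (eapply rootstep_det; eauto; fail);
    try (match goal with
         | H : rootstep _ _ |- _ => inversion H; fail
         end);
    try (exfalso; match goal with
         | H : ~ is_redex _ |- _ => apply H; eexists; eauto
         end; fail);
    try (exfalso; eapply unf_nolo; eauto; fail);
    try (f_equal; auto; fail).
Qed.

Lemma steps_unique k t u : lo_steps k t u -> unf u ->
  forall k' u', lo_steps k' t u' -> unf u' -> k = k'.
Proof.
  induction 1; intros Hu k' u' H' Hu'.
  - inversion H'; subst; auto. exfalso; eapply (unf_nolo _ _ Hu); eauto.
  - inversion H'; subst.
    + exfalso; eapply unf_nolo; eauto.
    + assert (u = u0) by (eapply lostep_det; eauto). subst.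
      f_equal. eapply IHlo_steps; eauto.
Qed.

Lemma closesR_clo L : exists a b, closesR (Clo Zero Shift) L = Clo a b.
Proof. destruct L; simpl; eauto. Qed.

Lemma key_step L : lostep (closesR (Clo Zero Shift) L) (closesR (Succ Zero) L).
Proof.
  induction L; simpl.
  - apply lo_root. constructor. simpl; auto.
  - apply lo_clol; auto. intros [t' Hr].
    destruct (closesR_clo L) as [x [y E]]. rewrite E in Hr. inversion Hr; subst; simpl in *; auto.
Qed.

Theorem mainTheorem6 (n : nat) (g : grammar) :
  reduction_grammar n g -> simple n g -> verbose g ->
  forall a : pat, In (NG n, a) g ->
  forall delta : tm, langP g a delta -> width delta = pwidth a.
Proof.
  intros [_ [HL Hk]] _ Hverb a Ha delta [ds Hd].
  destruct (Hk n (le_n n)) as [_ Hlang].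
  destruct (decomp _ _ _ _ Hd) as [tc [L [dc [E [Hl [Hp Hf]]]]]].
  assert (Hin : forall t' d', pvalid g (phead a) t' d' ->
            is_term (closesR t' L) /\ normalises_in n (closesR t' L)).
  { intros t' d' H'. destruct (Hf t' d' H') as [ds' Hds'].
    apply Hlang. eexists. econstructor; eauto. }
  subst delta. rewrite width_closesR, Hl.
  assert (width tc = 0); [|lia].
  assert (HLg : forall p, In p Lambda -> In p g) by exact HL.
  destruct (phead a) eqn:Eh; inversion Hp; subst; simpl; auto.
  -
    match goal with H : valid _ _ _ _ |- _ => rename H into Hv end.
    destruct n0.
    +
      exfalso.
      assert (H1 : pvalid g (PVar NT) (Clo Zero Shift)
        [DNode (NT, PClo (PVar NT) (PVar NS))
          [DNode (NT, PVar NN) [DNode (NN, PZero) []]; DNode (NS, PShift) []]]).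
      { constructor. econstructor. apply HLg; simpl; tauto.
        change [DNode (NT, PVar NN) [DNode (NN, PZero) []]; DNode (NS, PShift) []]
          with ([DNode (NT, PVar NN) [DNode (NN, PZero) []]] ++ [DNode (NS, PShift) []]).
        constructor; constructor; econstructor; try (apply HLg; simpl; tauto).
        constructor. constructor. apply HLg; simpl; tauto. constructor.
        constructor. }
      assert (H2 : pvalid g (PVar NT) (Succ Zero)
        [DNode (NT, PVar NN) [DNode (NN, PSucc (PVar NN)) [DNode (NN, PZero) []]]]).
      { constructor. econstructor. apply HLg; simpl; tauto.
        constructor. econstructor. apply HLg; simpl; tauto.
        constructor. constructor. econstructor. apply HLg; simpl; tauto. constructor. }
      destruct (Hin _ _ H1) as [_ [u1 [S1 U1]]].
      destruct (Hin _ _ H2) as [_ [u2 [S2 U2]]].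
      inversion S1; subst.
      * eapply unf_nolo; [exact U1| apply key_step].
      * match goal with
        | Hs : lostep _ ?u, Hk : lo_steps ?k ?u u1 |- _ =>
          assert (Eu : u = closesR (Succ Zero) L) by (symmetry; eapply lostep_det; [apply key_step|exact Hs]);
          rewrite Eu in Hk;
          assert (Ek : k = S k) by (eapply steps_unique; [exact Hk|exact U1|exact S2|exact U2]);
          lia
        end.
    +
      exfalso.
      assert (H1 : pvalid g (PVar NS) Shift [DNode (NS, PShift) []]).
      { constructor. econstructor. apply HLg; simpl; tauto. constructor. }
      destruct (Hin _ _ H1) as [Ht _]. apply is_term_closesR in Ht. exact Ht.
    +
      assert (H1 : pvalid g (PVar NN) (Succ tc) [DNode (NN, PSucc (PVar NN)) [d]]).
      { constructor. econstructor. apply HLg; simpl; tauto. constructor. constructor. exact Hv. }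
      destruct (Hin _ _ H1) as [Ht _]. apply is_term_closesR in Ht. simpl in Ht.
      destruct tc; simpl in *; tauto.
    + exfalso. eapply Hverb; eauto.
  -
    exfalso. clear -Eh. induction a; simpl in Eh; try discriminate; auto.
Qed.
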